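(* In the RSP setting described in the context, let $b\in\mathbb{N}^+$ and let $i^*$ be the smallest integer $i\ge 0$ such that $C_{\mathrm{opt}}(G^-_{S_i})>b$ (assuming such an $i$ exists). Define $L'=b\cdot S_{i^*}$, and $U'=U$ if $i^*=0$, $U'=2S_{i^*}(b+n)$ if $i^*>0$. Then $L'\le C_{\mathrm{opt}}(G)\le U'$ and $U'/L'\in O(1+n/b)$.
   Context: RSP setting: $G=(V,E,c,r)$ is a weakly connected directed graph with $n=|V|$, $m=|E|$, $c,r:E\to\mathbb{R}_{\ge0}$, vertices $s\ne t$, bound $R\ge 0$. Paths are edge sets; $P_v$ = set of paths from $s$ to $v$; $C_G(p)=\sum_{e\in p}c(e)$, $R_G(p)=\sum_{e\in p}r(e)$; $C_{\mathrm{opt}}(G)=\min\{C_G(p):p\in P_t,\ R_G(p)\le R\}$. It is assumed that a path $p\in P_t$ with $R_G(p)\le R$ exists and that $C_{\mathrm{opt}}(G)>0$. For $S>0$, $G^-_S=(V,E,c^-_S,r)$ with $c^-_S(e)=\lfloor c(e)/S\rfloor$ (same $s,t,R$). Bounds $L,U$: sort the edges $e_1,\dots,e_m$ ascending by cost; let $j^*$ be the smallest $j$ such that some $p\in P_t$ with $R_G(p)\le R$ uses only edges from $\{e_1,\dots,e_j\}$; set $L=c(e_{j^*})$ and $U=nL$ (these satisfy $L\le C_{\mathrm{opt}}(G)\le U$). Scaling factors: $S_i=2^{-i}U/(2n)$ for $i\in\mathbb{N}_0$. *)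

(* Defs.v *)
From HB Require Import structures.
From mathcomp Require Import all_boot all_order all_algebra.
From mathcomp Require Import boolp reals.
Set Implicit Arguments. Unset Strict Implicit. Unset Printing Implicit Defensive.
Import Order.TTheory GRing.Theory Num.Theory.
Local Open Scope ring_scope.

Section RSP.
Variables (V E : finType) (src tgt : E -> V).

Definition und_adj : rel V :=
  [rel x y | [exists e, ((src e == x) && (tgt e == y)) || ((src e == y) && (tgt e == x))]].
Definition weakly_connected : Prop := forall x y : V, connect und_adj x y.

Fixpoint walk_from (u : V) (es : seq E) : bool :=
  if es is e :: es' then (src e == u) && walk_from (tgt e) es' else true.

Definition is_path (s v : V) (p : {set E}) : Prop :=
  exists es : seq E,
    [/\ walk_from s es, last s (map tgt es) = v,
        uniq (s :: map tgt es) & p = [set e in es]].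

Variable R : realType.

Definition pcost (w : E -> R) (p : {set E}) : R := \sum_(e in p) w e.

Definition feasible (r : E -> R) (s t : V) (Rb : R) (p : {set E}) : Prop :=
  is_path s t p /\ pcost r p <= Rb.

(* C_opt for cost function w : the minimum of pcost w over feasible paths
   (0 if there is none; the theorem assumes there is one). *)
Definition Copt (w r : E -> R) (s t : V) (Rb : R) : R :=
  let F := [set p : {set E} | `[< feasible r s t Rb p >]] in
  if [pick p in F] is Some p0 then \big[Order.min/pcost w p0]_(p in F) pcost w p
  else 0.

Definition cminus (c : E -> R) (S : R) : E -> R :=
  fun e => (Num.floor (c e / S))%:~R.

Definition sorted_edges (c : E -> R) : seq E :=
  sort (fun e1 e2 => c e1 <= c e2) (enum E).

Definition feasible_prefix (c r : E -> R) (s t : V) (Rb : R) (j : nat) : Prop :=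
  exists p : {set E}, feasible r s t Rb p /\
    p \subset [set e in take j (sorted_edges c)].

(* L = c(e_jstar), jstar being 1-based *)
Definition Lval (c : E -> R) (jstar : nat) : R :=
  nth 0 (map c (sorted_edges c)) jstar.-1.

Definition Sfac (U : R) (n i : nat) : R := U / (2 * n%:R) / 2 ^+ i.

End RSP.

(* Main.v *)
Require Import Defs.
From HB Require Import structures.
From mathcomp Require Import all_boot all_order all_algebra.
From mathcomp Require Import boolp reals.
From mathcomp Require Import ring lra.
Import Order.TTheory GRing.Theory Num.Theory.
Local Open Scope ring_scope.

Section H.
Set Implicit Arguments.
Variables (R : realType) (V E : finType) (src tgt : E -> V).

Lemma Copt_le (w r : E -> R) s t Rb p :
  feasible src tgt r s t Rb p -> Copt src tgt w r s t Rb <= pcost w p.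
Proof.
move=> fp; rewrite /Copt.
have pF : p \in [set p : {set E} | `[< feasible src tgt r s t Rb p >]].
  by rewrite inE; apply/asboolP.
case: pickP => [p0 Hp0|H0]; last by rewrite H0 in pF.
by rewrite (bigD1 p pF) /= ge_min lexx.
Qed.

Lemma Copt_ge (w r : E -> R) s t Rb x :
  (exists p, feasible src tgt r s t Rb p) ->
  (forall p, feasible src tgt r s t Rb p -> x <= pcost w p) ->
  x <= Copt src tgt w r s t Rb.
Proof.
move=> [p fp] H; rewrite /Copt.
case: pickP => [p0 Hp0|H0].
  apply: (big_ind (fun y => x <= y)).
  - by apply: H; move: Hp0; rewrite inE => /asboolP.
  - by move=> a b' ha hb; rewrite le_min ha hb.
  - by move=> q; rewrite inE => /asboolP /H.
have := H0 p; rewrite inE => /negbT/negP; case; exact/asboolP.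
Qed.

Lemma path_card s v p : is_path src tgt s v p -> (#|p| < #|V|)%N.
Proof.
move=> [es [_ _ u ->]].
rewrite cardsE.
apply: (leq_ltn_trans (card_size es)).
move/card_uniqP: u => /= ; rewrite size_map => eq.
by rewrite -ltnS -eq; apply: max_card.
Qed.

Lemma scaled_le (c : E -> R) S p : 0 < S ->
  pcost (cminus c S) p <= pcost c p / S.
Proof.
move=> S0; rewrite /pcost mulr_suml; apply: ler_sum => e _.
exact: floor_le.
Qed.

Lemma scaled_ge (c : E -> R) S p : 0 < S ->
  pcost c p <= S * (pcost (cminus c S) p + #|p|%:R).
Proof.
move=> S0; rewrite /pcost -sum1_card natr_sum -big_split mulr_sumr /=.
apply: ler_sum => e _.
have := floor_itv (c e / S) => /andP [_ h].
rewrite -ler_pdivrMl // mulrC; apply: ltW; apply: (lt_le_trans h).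
by rewrite /cminus intrD.
Qed.


Lemma Lval_ge0 (c : E -> R) j : (forall e, 0 <= c e) -> 0 <= Lval c j.
Proof.
move=> c0; rewrite /Lval.
case: (ltnP j.-1 (size (map c (sorted_edges c)))) => h.
  by have /mapP [e _ ->] := mem_nth 0 h.
by rewrite nth_default.
Qed.

Lemma prefix_le (c : E -> R) j e : (forall e, 0 <= c e) ->
  (j <= size (sorted_edges c))%N ->
  e \in take j (sorted_edges c) -> c e <= Lval c j.
Proof.
move=> c0 hj he.
set s := sorted_edges c in hj he *.
have ss : sorted (fun e1 e2 => c e1 <= c e2) s.
  by apply: sort_sorted => x y; apply: le_total.
have jp : (0 < j)%N by case: j {hj} he => //; rewrite take0.
have ki : (index e (take j s) < size (take j s))%N by rewrite index_mem.
have ksz : (size (take j s) <= j)%N by rewrite size_take; case: ifP => // /negbT; rewrite -leqNgt.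
have -> : e = nth e s (index e (take j s)).
  by rewrite -(nth_take e (leq_trans ki ksz)) nth_index.
rewrite /Lval (nth_map e) -/s; last by rewrite prednK.
have tr : transitive (fun e1 e2 : E => c e1 <= c e2) by move=> x y z; apply: le_trans.
have rf : reflexive (fun e1 e2 : E => c e1 <= c e2) by move=> x /=; apply: lexx.
apply: (sorted_leq_nth tr rf e ss).
- by rewrite inE (leq_trans ki (leq_trans ksz hj)).
- by rewrite inE prednK.
- by rewrite -ltnS prednK // (leq_trans ki ksz).
Qed.

End H.

Theorem lemma8 (R : realType) :
  exists K : R, forall (V E : finType) (src tgt : E -> V) (c r : E -> R)
    (s t : V) (Rb : R) (jstar : nat) (b : nat) (istar : nat),
    weakly_connected src tgt ->
    (forall e, 0 <= c e) -> (forall e, 0 <= r e) -> s != t -> 0 <= Rb ->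
    (exists p, feasible src tgt r s t Rb p) ->
    0 < Copt src tgt c r s t Rb ->
    (* j* : smallest j such that a feasible path uses only e_1..e_j *)
    feasible_prefix src tgt c r s t Rb jstar ->
    (forall j, (j < jstar)%N -> ~ feasible_prefix src tgt c r s t Rb j) ->
    let L := Lval c jstar in
    let n := #|V| in
    let U := n%:R * L in
    (0 < b)%N ->
    (* i* : smallest i with C_opt(G^-_{S_i}) > b *)
    b%:R < Copt src tgt (cminus c (Sfac U n istar)) r s t Rb ->
    (forall i, (i < istar)%N ->
       ~ (b%:R < Copt src tgt (cminus c (Sfac U n i)) r s t Rb)) ->
    let L' := b%:R * Sfac U n istar in
    let U' := if istar == 0%N then U else 2 * Sfac U n istar * (b + n)%:R in
    [/\ L' <= Copt src tgt c r s t Rb, Copt src tgt c r s t Rb <= U'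
      & U' / L' <= K * (1 + n%:R / b%:R)].
Proof.
exists 2 => V E src tgt c r s t Rb jstar b istar _ c0 r0 st Rb0 exf Cpos fpj minj
  L n U b0 hb hmin L' U'.
set C := Copt src tgt c r s t Rb in Cpos *.
have n0 : (0 < n)%N.
  by case: exf => p [hp _]; have h := path_card hp; exact: (leq_ltn_trans (leq0n _) h).
have jsz : (jstar <= size (sorted_edges c))%N.
  case: leqP => // hlt; exfalso; apply: (minj _ hlt).
  case: fpj => p [fp sub]; exists p; split => //.
  by rewrite take_size -(take_oversize (ltnW hlt)).
have L0 : 0 <= L by apply: Lval_ge0.
have CU : C <= U.
  case: fpj => p [fp sub].
  apply: (le_trans (Copt_le _ fp)).
  apply: (@le_trans _ _ (\sum_(e in p) L)).
    apply: ler_sum => e ep; apply: prefix_le => //.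
    by have := subsetP sub e ep; rewrite inE.
  rewrite sumr_const -mulr_natl /U ler_wpM2r // ler_nat.
  by case: fp => [hp _]; apply: ltnW; apply: (path_card hp).
have U0 : 0 < U by apply: (lt_le_trans Cpos CU).
have n0R : 0 < n%:R :> R by rewrite ltr0n.
have Spos : forall i, 0 < Sfac U n i.
  by move=> i; rewrite /Sfac !divr_gt0 // ?exprn_gt0 // mulr_gt0.
have b0R : 0 < b%:R :> R by rewrite ltr0n.
rewrite /L' /U'; clear L' U'.
split.
- apply: Copt_ge => // p fp.
  have h1 := Copt_le (cminus c (Sfac U n istar)) fp.
  have h2 := @scaled_le _ _ c _ p (Spos istar).
  rewrite -ler_pdivlMr //; apply: ltW.
  exact: (lt_le_trans hb (le_trans h1 h2)).
- case: istar hb hmin => [|k] hb hmin //=.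
  have hk : Copt src tgt (cminus c (Sfac U n k)) r s t Rb <= b%:R.
    by rewrite leNgt; apply/negP; apply: hmin.
  have Sk : Sfac U n k = 2 * Sfac U n k.+1.
    rewrite /Sfac exprS; field.
    by apply/andP; split; rewrite ?expf_neq0 // ?mulf_neq0 // gt_eqF.
  rewrite -Sk.
  have : C / Sfac U n k - n%:R <= b%:R.
    apply: le_trans hk; apply: Copt_ge => // q fq.
    have h1 := Copt_le c fq.
    have h2 := @scaled_ge _ _ c _ q (Spos k).
    have h3 : C / Sfac U n k <= pcost (cminus c (Sfac U n k)) q + #|q|%:R.
      by rewrite ler_pdivrMr // mulrC; apply: le_trans h2.
    have h4 : #|q|%:R <= n%:R :> R.
      by rewrite ler_nat; case: fq => [hq _]; apply: ltnW; apply: (path_card hq).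
    lra.
  rewrite natrD -ler_pdivrMl // mulrC => h; lra.
- case: istar hb hmin => [|k] hb hmin /=.
    rewrite /Sfac expr0 divr1.
    have -> : U / (b%:R * (U / (2 * n%:R))) = 2 * (n%:R / b%:R).
      field; rewrite !gt_eqF //.
    have : 0 <= n%:R / b%:R :> R by rewrite divr_ge0 // ltW.
    lra.
  have Sk0 := Spos k.+1.
  set S := Sfac U n k.+1 in Sk0 *.
  rewrite natrD.
  have -> : 2 * S * (b%:R + n%:R) / (b%:R * S) = 2 * (1 + n%:R / b%:R).
    field; rewrite !gt_eqF //.
  done.
Qed.
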